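(* Let $\mathcal B$ be a binomial class of reluctant functions and suppose there is a delta operator $\mathfrak d$ on $\mathbb Q[x]$ whose basic sequence $(p_n(x))_{n\ge0}$ satisfies $|F(S,X)|=p_n(|X|)$ whenever $|S|=n$ (for all finite disjoint $S,X$). Let $x$ be a positive integer, $n\ge0$, and $\mathcal Z=(z_i)_{i\ge0}$ a sequence of integers with $1\le z_0\le z_1\le\cdots\le z_{n-1}\le x$ (the remaining terms arbitrary). Then $$ord(z_0,\dots,z_{n-1})=t_n\big(x;\mathfrak d,(x-z_i)_{i\ge0}\big)=t_n\big(0;\mathfrak d,(-z_i)_{i\ge0}\big),$$ i.e. $t_n(0;\mathfrak d,-\mathcal Z)$ counts the reluctant functions in $\mathcal B$ from an $n$-element set to $\{1,\dots,x\}$ whose order statistics are bounded by $\mathcal Z$.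
   Context: For finite disjoint sets $S,X$, a reluctant function from $S$ to $X$ is a map $f:S\to S\cup X$ such that for every $s\in S$ some iterate $f^k(s)$, $k\ge1$, lies in $X$; this element is the final image of $s$. A binomial class $\mathcal B$ assigns to each pair $(S,X)$ of finite disjoint sets a set $F(S,X)$ of reluctant functions from $S$ to $X$, compatible with bijections of $S$ and $X$, such that for disjoint $X,Y$ the map $f\mapsto(f_A,f_{S\setminus A})$ ($A$ = elements whose final image is in $X$; restrictions) is a bijection from $F(S,X\cup Y)$ onto $\bigsqcup_{A\subseteq S}F(A,X)\times F(S\setminus A,Y)$. For $S=\{s_0,\dots,s_{n-1}\}$, $X=\{1,\dots,x\}$, $f\in F(S,X)$, let $x_i$ be the final image of $s_i$ and $x_{(0)}\le\cdots\le x_{(n-1)}$ its nondecreasing rearrangement; $ord(z_0,\dots,z_{n-1})$ is the number of $f\in F(S,X)$ with $x_{(j)}\le z_j$ for all $j$. A delta operator is a linear operator $\mathfrak d$ on $\mathbb Q[x]$ commuting with all shifts $f(x)\mapsto f(x+a)$ and with $\mathfrak d(x)$ a nonzero constant; its basic sequence is the unique $(p_n)$ with $\deg p_n=n$, $p_0=1$, $p_n(0)=0$ ($n\ge1$), $\mathfrak dp_n=np_{n-1}$. $t_n(x;\mathfrak d,\mathcal W)$ denotes the $n$-th term of the generalized Gončarov basis associated with $(\mathfrak d,\mathcal W)$ for a sequence $\mathcal W=(w_i)_{i\ge0}$: the unique sequence $(t_n)_{n\ge0}$ with $\deg t_n=n$ and $\mathfrak d^{\,i}(t_n)$ evaluated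 at $w_i$ equal to $n!\,\delta_{i,n}$ for all $i,n$. *)

(* Defs.v *)
From HB Require Import structures.
From mathcomp Require Import all_boot all_order all_algebra.
Set Implicit Arguments. Unset Strict Implicit. Unset Printing Implicit Defensive.
Import Order.TTheory GRing.Theory Num.Theory.

Section Reluctant.
Variables (S X : finType).

Definition rstep (f : {ffun S -> S + X}) (u : S + X) : S + X :=
  match u with inl s => f s | inr x => inr x end.

Definition is_inr (u : S + X) : bool := if u is inr _ then true else false.

Definition reluctant (f : {ffun S -> S + X}) : Prop :=
  forall s : S, exists k : nat, (0 < k)%N /\ is_inr (iter k (rstep f) (inl s)).

(* final image of s (the element of X reached; the path reaches X within
   #|S| steps when f is reluctant, and stays there).  None if not reached. *)
Definition final (f : {ffun S -> S + X}) (s : S) : option X :=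
  match iter #|S| (rstep f) (inl s) with inr x => Some x | inl _ => None end.

End Reluctant.

Definition transport (S S' X X' : finType) (sigma : S -> S') (sigma' : S' -> S)
  (tau : X -> X') (f : {ffun S -> S + X}) : {ffun S' -> S' + X'} :=
  [ffun s' => match f (sigma' s') with
              | inl s => inl (sigma s) | inr x => inr (tau x) end].

(* used for the restrictions occurring in a binomial class.)           *)
Definition restr (S X Y Z : finType) (A : {set S}) (pr : X + Y -> option Z)
  (f : {ffun S -> S + (X + Y)}) : {ffun {s : S | s \in A} -> {s : S | s \in A} + Z} :=
  [ffun a => match f (val a) with
             | inl s' => match insub s' with Some a' => inl a' | None => inl a end
             | inr w => match pr w with Some z => inr z | None => inl a end
             end].

Definition prL (X Y : finType) (w : X + Y) : option X :=
  match w with inl x => Some x | inr _ => None end.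
Definition prR (X Y : finType) (w : X + Y) : option Y :=
  match w with inl _ => None | inr y => Some y end.

Definition finalX (S X Y : finType) (f : {ffun S -> S + (X + Y)}) : {set S} :=
  [set s | if final f s is Some (inl _) then true else false].

Record binomial_class := BinomialClass {
  bc_F : forall S X : finType, {set {ffun S -> S + X}};
  bc_reluctant : forall (S X : finType) f, f \in bc_F S X -> reluctant f;
  bc_bij : forall (S S' X X' : finType) (sigma : S -> S') (sigma' : S' -> S)
      (tau : X -> X') (tau' : X' -> X),
      cancel sigma sigma' -> cancel sigma' sigma ->
      cancel tau tau' -> cancel tau' tau ->
      forall f, (transport sigma sigma' tau f \in bc_F S' X') = (f \in bc_F S X);
  (* the map f |-> (f_A, f_{S\A}) is well defined ... *)
  bc_decomp_into : forall (S X Y : finType) f, f \in bc_F S (X + Y)%type ->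
      restr (finalX f) (@prL X Y) f \in bc_F _ X /\
      restr (~: finalX f) (@prR X Y) f \in bc_F _ Y;
  (* ... injective ... *)
  bc_decomp_inj : forall (S X Y : finType) (A : {set S}) f g,
      f \in bc_F S (X + Y)%type -> g \in bc_F S (X + Y)%type ->
      finalX f = A -> finalX g = A ->
      restr A (@prL X Y) f = restr A (@prL X Y) g ->
      restr (~: A) (@prR X Y) f = restr (~: A) (@prR X Y) g -> f = g;
  (* ... and onto the disjoint union over A ⊆ S of F(A,X) × F(S\A,Y) *)
  bc_decomp_onto : forall (S X Y : finType) (A : {set S}) g h,
      g \in bc_F {s : S | s \in A} X -> h \in bc_F {s : S | s \in ~: A} Y ->
      exists2 f, f \in bc_F S (X + Y)%type &
        [/\ finalX f = A, restr A (@prL X Y) f = g & restr (~: A) (@prR X Y) f = h]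
}.

Local Open Scope ring_scope.

Definition delta_operator (d : {poly rat} -> {poly rat}) : Prop :=
  [/\ (forall (a : rat) (p q : {poly rat}), d (a *: p + q) = a *: d p + d q),
      (forall (a : rat) (p : {poly rat}),
          d (p \Po ('X + a%:P)) = (d p) \Po ('X + a%:P)) &
      (exists2 c : rat, c != 0 & d 'X = c%:P)].

Definition basic_sequence (d : {poly rat} -> {poly rat}) (p : nat -> {poly rat}) : Prop :=
  [/\ (forall n, size (p n) = n.+1),
      p 0%N = 1,
      (forall n, (p n.+1).[0] = 0) &
      (forall n, d (p n.+1) = n.+1%:R *: p n)].

Definition goncarov_basis (d : {poly rat} -> {poly rat}) (W : nat -> rat)
    (t : nat -> {poly rat}) : Prop :=
  forall n, size (t n) = n.+1 /\
    forall i, (iter i d (t n)).[W i] = (n`! * (i == n))%:R.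

(* ord(z_0,...,z_{n-1}) : S = {s_0..s_{n-1}} = 'I_n, X = {1..x} where  *)
(* j : 'I_x represents the integer j+1.                                *)
Definition final_value (n x : nat) (f : {ffun 'I_n -> 'I_n + 'I_x}) (i : 'I_n) : nat :=
  if final f i is Some j then (val j).+1 else 0%N.

Definition order_stats (n x : nat) (f : {ffun 'I_n -> 'I_n + 'I_x}) : seq nat :=
  sort leq [seq final_value f i | i <- enum 'I_n].

Definition ord_count (B : binomial_class) (n x : nat) (z : nat -> int) : nat :=
  #|[set f in bc_F B 'I_n 'I_x |
      [forall j : 'I_n, ((nth 0%N (order_stats f) j)%:Z <= z j)%R]]|.

(* Main.v *)
Require Import Defs.
From HB Require Import structures.
From mathcomp Require Import all_boot all_order all_algebra.
Import Order.TTheory GRing.Theory Num.Theory.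
Set Implicit Arguments. Unset Strict Implicit. Unset Printing Implicit Defensive.

Section Iter.
Variables (S X : finType) (f : {ffun S -> S + X}).
Hypothesis rel : reluctant f.

Lemma iter_inr k x : iter k (rstep f) (inr x) = inr x.
Proof. by elim: k => //= k ->. Qed.

Lemma inr_stays k l s : is_inr (iter k (rstep f) (inl s)) ->
  is_inr (iter (l + k) (rstep f) (inl s)).
Proof.
rewrite iterD; case: (iter k (rstep f) (inl s)) => // x _.
by rewrite iter_inr.
Qed.

Lemma reach s : is_inr (iter #|S| (rstep f) (inl s)).
Proof.
apply/negPn/negP => Hn.
pose u k := iter k (rstep f) (inl s).
have Hsm : forall k, k <= #|S| -> ~~ is_inr (u k).
  move=> k Hk; apply/negP => Hk'; move: Hn; rewrite -(subnK Hk).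
  by rewrite (inr_stays _ Hk').
pose h (k : 'I_#|S|.+1) := if u k is inl t then t else s.
have : ~~ injectiveb h.
  apply/negP => /injectiveP Hi; have := leq_card _ Hi.
  by rewrite card_ord ltnn.
case/injectivePn => i [j Hij Hh].
have Hu : forall k : 'I_#|S|.+1, u k = inl (h k).
  move=> k; rewrite /h; have := Hsm k; rewrite -ltnS ltn_ord => /(_ isT).
  by case: (u k).
have Huij : u i = u j by rewrite !Hu Hh.
wlog Hlt : i j Hij Hh Huij / i < j.
  move=> W; case: (ltngtP i j) => H.
  - exact: (W i j).
  - by apply: (W j i) => //; rewrite eq_sym.
  - by rewrite (ord_inj H) eqxx in Hij.
have Hper : forall t, u (t + i) = u (t + j) by move=> t; rewrite /u !iterD -/(u i) Huij.
have Hall : forall m, ~~ is_inr (u m).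
  elim/ltn_ind => m IH.
  case: (leqP m #|S|) => Hm; first exact: Hsm.
  have Hjm : j <= m by apply: leq_trans (ltnW Hm); rewrite -ltnS ltn_ord.
  have -> : m = (m - j) + j by rewrite subnK.
  rewrite -Hper; apply: IH.
  rewrite -{2}(subnK Hjm) ltn_add2l //.
have [k [_ Hk]] := rel s.
by move: (Hall k); rewrite /u Hk.
Qed.

Lemma stable k s : #|S| <= k -> iter k (rstep f) (inl s) = iter #|S| (rstep f) (inl s).
Proof.
move=> Hk; rewrite -(subnK Hk) iterD; have := reach s.
by case: (iter #|S| (rstep f) (inl s)) => // x _; rewrite iter_inr.
Qed.

Lemma final_some s : final f s != None.
Proof. by rewrite /final; have := reach s; case: (iter _ _ _). Qed.

Lemma final_step s s' : f s = inl s' -> final f s' = final f s.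
Proof.
move=> Hs; rewrite /final -(stable (k := #|S|.+1) s (leqnSn _)) iterSr /=.
by rewrite Hs.
Qed.

Lemma final_inr s x : f s = inr x -> final f s = Some x.
Proof.
move=> Hs; rewrite /final.
have : 0 < #|S| by apply/card_gt0P; exists s.
case: #|S| => // k _; rewrite iterSr /= Hs iter_inr //.
Qed.

End Iter.

Lemma final_restr (S X Y Z : finType) (A : {set S}) (pr : X + Y -> option Z)
  (f : {ffun S -> S + (X + Y)}) :
  reluctant f -> reluctant (restr A pr f) ->
  (forall s, (s \in A) = (if final f s is Some w then pr w != None else false)) ->
  forall a : {s | s \in A}, final (restr A pr f) a = obind pr (final f (val a)).
Proof.
move=> rf rg HA a.
have Ha := valP a; rewrite HA in Ha.
case Hw: (final f (val a)) Ha => [w|] // Hpw.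
case Hz: (pr w) Hpw => [z|] // _ /=.
set g := restr A pr f.
have Inv : forall k,
  (exists b : {s | s \in A}, iter k (rstep g) (inl a) = inl b /\
      iter k (rstep f) (inl (val a)) = inl (val b) /\ final f (val b) = Some w)
  \/ (iter k (rstep g) (inl a) = inr z /\ iter k (rstep f) (inl (val a)) = inr w).
  elim=> [|k [[b [Hg [Hf Hb]]]|[Hg Hf]]]; first by left; exists a.
  - rewrite /= Hg Hf /= /g /restr ffunE.
    case Hfb: (f (val b)) => [s'|w'].
    + have Hs' : s' \in A by rewrite HA (final_step rf Hfb) Hb Hz.
      left; exists (Sub s' Hs'); rewrite insubT /=; split => //; split => //.
      by rewrite (final_step rf Hfb).
    + have := final_inr Hfb; rewrite Hb => -[<-]; rewrite Hz.
      by right.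
  - by right; rewrite /= Hg Hf.
have Hc : #|{: {s | s \in A}}| <= #|S| by apply: (leq_card val); exact: val_inj.
rewrite /final -(stable rg a Hc).
case: (Inv #|S|) => [[b [_ [Hf _]]]|[-> //]].
by have := reach rf (val a); rewrite Hf.
Qed.

Lemma iter_transport (S S' X X' : finType) (sigma : S -> S') (sigma' : S' -> S)
  (tau : X -> X') (f : {ffun S -> S + X}) :
  cancel sigma sigma' ->
  forall k s, iter k (rstep (transport sigma sigma' tau f)) (inl (sigma s)) =
    match iter k (rstep f) (inl s) with inl t => inl (sigma t) | inr x => inr (tau x) end.
Proof.
move=> c1; elim=> [|k IH] s //=; rewrite IH.
case: (iter k (rstep f) (inl s)) => [t|x] //=.
by rewrite /transport ffunE c1; case: (f t).
Qed.

Lemma final_transport (S S' X X' : finType) (sigma : S -> S') (sigma' : S' -> S)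
  (tau : X -> X') (f : {ffun S -> S + X}) :
  cancel sigma sigma' -> cancel sigma' sigma -> reluctant f ->
  forall s, final (transport sigma sigma' tau f) (sigma s) = omap tau (final f s).
Proof.
move=> c1 c2 rf s.
have Hc : #|S'| = #|S|.
  apply/eqP; rewrite eqn_leq (leq_card sigma' (can_inj c2)) (leq_card sigma (can_inj c1)) //.
rewrite /final Hc iter_transport //; have := reach rf s.
by case: (iter _ _ _).
Qed.

Lemma transport_comp (S S' X X' : finType) (sigma : S -> S') (sigma' : S' -> S)
  (tau : X -> X') (tau' : X' -> X) (f : {ffun S' -> S' + X'}) :
  cancel sigma' sigma -> cancel tau' tau ->
  transport sigma sigma' tau (transport sigma' sigma tau' f) = f.
Proof.
move=> c2 d2; apply/ffunP => s; rewrite /transport !ffunE c2.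
by case: (f s) => [t|x]; rewrite ?c2 ?d2.
Qed.

Section Counting.
Variable B : binomial_class.

Lemma card_transport (S S' X X' : finType) (sigma : S -> S') (sigma' : S' -> S)
  (tau : X -> X') (tau' : X' -> X)
  (P : pred {ffun S -> S + X}) (P' : pred {ffun S' -> S' + X'}) :
  cancel sigma sigma' -> cancel sigma' sigma ->
  cancel tau tau' -> cancel tau' tau ->
  (forall f, f \in bc_F B S X -> P' (transport sigma sigma' tau f) = P f) ->
  #|[set f in bc_F B S X | P f]| = #|[set f in bc_F B S' X' | P' f]|.
Proof.
move=> c1 c2 d1 d2 HP.
have -> : [set f in bc_F B S' X' | P' f] =
   [set transport sigma sigma' tau f | f in [set f in bc_F B S X | P f]].
  apply/setP => f'; rewrite inE; apply/idP/imsetP.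
  - case/andP => Hf' HP'.
    have Hf : transport sigma' sigma tau' f' \in bc_F B S X.
      by rewrite (bc_bij B c2 c1 d2 d1).
    exists (transport sigma' sigma tau' f'); last by rewrite transport_comp.
    by rewrite inE Hf -HP // transport_comp.
  - move=> [f]; rewrite inE => /andP [Hf HPf] ->.
    by rewrite (bc_bij B c1 c2 d1 d2) Hf HP.
rewrite card_imset //.
by apply: (can_inj (g := transport sigma' sigma tau')) => f; rewrite transport_comp.
Qed.

Lemma card_decomp (S X Y : finType) (A : {set S})
  (P : pred {ffun {s : S | s \in A} -> {s : S | s \in A} + X})
  (Q : pred {ffun {s : S | s \in ~: A} -> {s : S | s \in ~: A} + Y}) :
  #|[set f in bc_F B S (X + Y)%type | (finalX f == A) &&
       P (restr A (@prL X Y) f) && Q (restr (~: A) (@prR X Y) f)]| =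
  (#|[set g in bc_F B _ X | P g]| * #|[set h in bc_F B _ Y | Q h]|)%N.
Proof.
rewrite -cardsX.
have -> : setX [set g in bc_F B _ X | P g] [set h in bc_F B _ Y | Q h] =
  [set (restr A (@prL X Y) f, restr (~: A) (@prR X Y) f) | f in
    [set f in bc_F B S (X + Y)%type | (finalX f == A) &&
       P (restr A (@prL X Y) f) && Q (restr (~: A) (@prR X Y) f)]].
  apply/setP => [[g h]]; rewrite !inE /=; apply/idP/imsetP.
  - case/andP => /andP [Hg Pg] /andP [Hh Qh].
    have [f Hf [HfA Hfg Hfh]] := bc_decomp_onto Hg Hh.
    exists f; last by rewrite Hfg Hfh.
    by rewrite inE Hf HfA eqxx Hfg Hfh Pg Qh.
  - move=> [f]; rewrite inE => /andP [Hf /andP [/andP [/eqP HA Pf] Qf]] [-> ->].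
    have := bc_decomp_into Hf; rewrite HA => -[H1 H2].
    by rewrite H1 H2 Pf Qf.
rewrite card_in_imset // => f g; rewrite !inE.
move=> /andP [Hf /andP [/andP [/eqP HA _] _]] /andP [Hg /andP [/andP [/eqP HB _] _]] [E1 E2].
exact: (bc_decomp_inj Hf Hg HA HB E1 E2).
Qed.

End Counting.

Lemma count_enum_card (T : finType) (P : pred T) :
  count P (enum T) = #|[set s | P s]|.
Proof.
rewrite cardE /enum_mem size_filter -enumT filter_predT.
by apply: eq_count => x; rewrite !inE.
Qed.

Lemma nth_sorted_count (c : int) (u : seq nat) j :
  sorted leq u -> (j < size u)%N ->
  ((nth 0%N u j)%:Z <= c)%R = (j < count (fun a : nat => (a%:Z <= c)%R) u)%N.
Proof.
elim: u j => [|a u IH] j //= Hs Hj.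
have Hu : sorted leq u by apply: path_sorted Hs.
have Hall : all (leq a) u by apply: order_path_min Hs; exact: leq_trans.
case Ha: (a%:Z <= c)%R.
- case: j Hj => [|j] Hj //=.
  by rewrite IH // add1n ltnS.
- have H0 : count (fun a0 : nat => (a0%:Z <= c)%R) u = 0%N.
    apply/eqP; rewrite -leqn0 leqNgt -has_count; apply/hasPn => b Hb.
    apply/negP => Hbc; move/allP: Hall => /(_ b Hb) Hab.
    by move: Ha; rewrite (le_trans _ Hbc) // lez_nat.
  rewrite H0 /= ?addn0 ?ltn0; case: j Hj => [|j] Hj //=.
  apply/negP => Hbc; have Hb : nth 0%N u j \in u by apply: mem_nth.
  move/allP: Hall => /(_ _ Hb) Hab.
  by move: Ha; rewrite (le_trans _ Hbc) // lez_nat.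
Qed.

Definition fvv (S X : finType) (v : X -> nat) (f : {ffun S -> S + X}) (s : S) : nat :=
  if final f s is Some w then v w else 0%N.
Definition cnt (S X : finType) (v : X -> nat) (f : {ffun S -> S + X}) (c : int) : nat :=
  #|[set s | ((fvv v f s)%:Z <= c)%R]|.
Definition condn (z : nat -> int) (n : nat) (S X : finType) (v : X -> nat)
  (f : {ffun S -> S + X}) : bool := [forall j : 'I_n, (j < cnt v f (z j))%N].
Definition vI (y : nat) (j : 'I_y) : nat := (val j).+1.
Definition ordT (B : binomial_class) (z : nat -> int) (S : finType) (y : nat) : nat :=
  #|[set f in bc_F B S 'I_y | condn z #|S| (@vI y) f]|.

Lemma ord_count_ordT B n y z : ord_count B n y z = ordT B z 'I_n y.
Proof.
rewrite /ord_count /ordT card_ord; apply: eq_card => f; rewrite !inE.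
congr andb; apply: eq_forallb => j.
rewrite nth_sorted_count; last first.
- by rewrite size_sort size_map size_enum_ord.
- exact: (sort_sorted leq_total).
by rewrite count_sort count_map count_enum_card.
Qed.

Lemma cnt_transport (S S' X X' : finType) (sigma : S -> S') (sigma' : S' -> S)
  (tau : X -> X') (v : X -> nat) (v' : X' -> nat) (f : {ffun S -> S + X}) c :
  cancel sigma sigma' -> cancel sigma' sigma -> reluctant f ->
  (forall w, v' (tau w) = v w) ->
  cnt v' (transport sigma sigma' tau f) c = cnt v f c.
Proof.
move=> c1 c2 rf Hv.
have Hf : forall s, fvv v' (transport sigma sigma' tau f) (sigma s) = fvv v f s.
  move=> s; rewrite /fvv final_transport //.
  by case: (final f s) => //= w; rewrite Hv.
rewrite /cnt -(card_imset _ (can_inj c1)); apply: eq_card => s'.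
rewrite inE; apply/idP/imsetP.
- by move=> H; exists (sigma' s'); [rewrite inE -Hf c2 | rewrite c2].
- by move=> [s]; rewrite inE => H ->; rewrite Hf.
Qed.

Lemma ordT_bij B z (S S' : finType) (sigma : S -> S') (sigma' : S' -> S) y :
  cancel sigma sigma' -> cancel sigma' sigma -> ordT B z S y = ordT B z S' y.
Proof.
move=> c1 c2.
have Hc : #|S'| = #|S|.
  apply/eqP; rewrite eqn_leq (leq_card sigma' (can_inj c2)) (leq_card sigma (can_inj c1)) //.
rewrite /ordT; apply: (card_transport (tau := id) (tau' := id)) => // f Hf.
rewrite /condn Hc; apply: eq_forallb => j.
by rewrite (cnt_transport (v := @vI y)) //; exact: (bc_reluctant Hf).
Qed.

Lemma ordT_ord B z (S : finType) y : ordT B z S y = ordT B z 'I_#|S| y.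
Proof. exact: (ordT_bij B z y (@enum_rankK S) (@enum_valK S)). Qed.

Definition vX (m k : nat) (w : 'I_m + 'I_k) : nat :=
  match w with inl a => (val a).+1 | inr b => (m + val b).+1 end.

Section Split.
Variables (m k : nat) (S : finType) (f : {ffun S -> S + ('I_m + 'I_k)}).
Hypothesis rf : reluctant f.
Let A := finalX f.
Let g := restr A (@prL 'I_m 'I_k) f.
Hypothesis rg : reluctant g.

Lemma finalX_char s :
  (s \in A) = (if final f s is Some w then @prL 'I_m 'I_k w != None else false).
Proof. by rewrite /A /finalX inE; case: (final f s) => // [[]]. Qed.

Lemma fvv_A (a : {s | s \in A}) : fvv (@vI m) g a = fvv (@vX m k) f (val a).
Proof.
rewrite /fvv (final_restr rf rg finalX_char).
have := valP a; rewrite finalX_char.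
by case: (final f (val a)) => // [[x|y]].
Qed.

Lemma fvv_le s : ((fvv (@vX m k) f s)%:Z <= m%:Z)%R = (s \in A).
Proof.
rewrite finalX_char /fvv; have := final_some rf s.
case: (final f s) => // [[x|y]] _ /=; rewrite lez_nat.
- exact: ltn_ord.
- by rewrite ltnNge leq_addr.
Qed.

Lemma cnt_splitA : cnt (@vX m k) f m%:Z = #|A|.
Proof. by rewrite /cnt; apply: eq_card => s; rewrite inE fvv_le. Qed.

Lemma cnt_split (c : int) : (c <= m%:Z)%R -> cnt (@vX m k) f c = cnt (@vI m) g c.
Proof.
move=> Hc; rewrite /cnt.
have -> : [set s | ((fvv (@vX m k) f s)%:Z <= c)%R] =
   val @: [set a : {s | s \in A} | ((fvv (@vI m) g a)%:Z <= c)%R].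
  apply/setP => s; rewrite inE; apply/idP/imsetP.
  - move=> H.
    have HA : s \in A by rewrite -fvv_le (le_trans H).
    by exists (Sub s HA) => //; rewrite inE fvv_A.
  - by move=> [a]; rewrite inE fvv_A => H ->.
by rewrite card_imset //; exact: val_inj.
Qed.

End Split.

Lemma card_sub_set (S : finType) (A : {set S}) : #|{: {s | s \in A}}| = #|A|.
Proof. by rewrite card_sig; apply: eq_card => s; rewrite inE. Qed.

Definition Pi (z : nat -> int) (i : nat) (S X : finType) (v : X -> nat)
  (f : {ffun S -> S + X}) : bool :=
  ~~ (i < cnt v f (z i))%N && [forall j : 'I_i, (j < cnt v f (z j))%N].

Lemma Pi_equiv (z : nat -> int) (m k i : nat) (S : finType)
  (f : {ffun S -> S + ('I_m + 'I_k)}) :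
  reluctant f -> reluctant (restr (finalX f) (@prL 'I_m 'I_k) f) ->
  (forall j, (j <= i)%N -> (z j <= m%:Z)%R) -> (z i = m%:Z)%R ->
  Pi z i (@vX m k) f =
  (#|finalX f| == i) && condn z i (@vI m) (restr (finalX f) (@prL 'I_m 'I_k) f).
Proof.
move=> rf rg Hz Hzi; rewrite /Pi /condn Hzi cnt_splitA //.
have -> : [forall j : 'I_i, (j < cnt (@vX m k) f (z j))%N] =
  [forall j : 'I_i, (j < cnt (@vI m) (restr (finalX f) (@prL 'I_m 'I_k) f) (z j))%N].
  apply: eq_forallb => j; rewrite cnt_split //; apply: Hz; exact: ltnW.
case: i Hz Hzi => [|i] Hz Hzi.
  by rewrite -leqNgt leqn0.
case/boolP: [forall _, _] => H; last by rewrite !andbF.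
have Hi : (i < #|finalX f|)%N.
  move/forallP: H => /(_ ord_max) /= H.
  apply: leq_trans H _; rewrite -card_sub_set /cnt; exact: max_card.
rewrite !andbT -leqNgt eqn_leq andbC.
by rewrite Hi.
Qed.

Lemma card_partition_by (T J : finType) (D : {set T}) (P : pred T) (h : T -> J) :
  #|[set x in D | P x]| = (\sum_(a : J) #|[set x in D | (h x == a) && P x]|)%N.
Proof.
rewrite -sum1_card (partition_big h xpredT) //=; apply: eq_bigr => a _.
rewrite -sum1_card; apply: eq_bigl => x; rewrite !inE.
by rewrite -andbA (andbC (P x)).
Qed.

Lemma card_F_ord B (S X : finType) : #|bc_F B S X| = #|bc_F B 'I_#|S| X|.
Proof.
have E : forall (T : finType) (D : {set T}), #|D| = #|[set x in D | predT x]|.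
  by move=> T D; apply: eq_card => x; rewrite !inE andbT.
rewrite E (E _ (bc_F B 'I_#|S| X)).
apply: (card_transport (tau := id) (tau' := id) (@enum_rankK S) (@enum_valK S)) => //.
Qed.

Lemma term_i B z (S : finType) (m k i : nat) :
  (forall j, (j <= i)%N -> (z j <= m%:Z)%R) -> (z i = m%:Z)%R ->
  #|[set f in bc_F B S ('I_m + 'I_k)%type | Pi z i (@vX m k) f]| =
  ('C(#|S|, i) * (ordT B z 'I_i m * #|bc_F B 'I_(#|S| - i) 'I_k|))%N.
Proof.
move=> Hz Hzi.
rewrite (card_partition_by _ _ (@finalX S 'I_m 'I_k)).
set c := (ordT B z 'I_i m * #|bc_F B 'I_(#|S| - i) 'I_k|)%N.
have Hterm : forall A : {set S},
  #|[set f in bc_F B S ('I_m + 'I_k)%type | (finalX f == A) && Pi z i (@vX m k) f]| =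
  (if #|A| == i then c else 0)%N.
  move=> A.
  have -> : #|[set f in bc_F B S ('I_m + 'I_k)%type | (finalX f == A) && Pi z i (@vX m k) f]| =
    #|[set f in bc_F B S ('I_m + 'I_k)%type | (finalX f == A) &&
        ((fun g => (#|A| == i) && condn z i (@vI m) g) (restr A (@prL 'I_m 'I_k) f)) &&
        predT (restr (~: A) (@prR 'I_m 'I_k) f)]|.
    apply: eq_card => f; rewrite !inE andbT.
    case/boolP: (f \in bc_F B S _) => //= Hf.
    case/boolP: (finalX f == A) => //= /eqP HA.
    have rf := bc_reluctant Hf.
    have rg : reluctant (restr (finalX f) (@prL 'I_m 'I_k) f).
      by case: (bc_decomp_into Hf) => H _; exact: (bc_reluctant H).
    by rewrite Pi_equiv // HA.
  rewrite (@card_decomp B S (ordinal m) (ordinal k) A (fun g => (#|A| == i) && condn z i (@vI m) g) predT).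
  case: eqP => HAi; last first.
    rewrite [#|[set g in _ | _]|](_ : _ = 0%N) //.
    by apply: eq_card0 => g; rewrite !inE andbF.
  rewrite /c; congr (_ * _)%N.
    transitivity (ordT B z {s | s \in A} m).
      by rewrite /ordT card_sub_set HAi; apply: eq_card => g; rewrite !inE.
    by rewrite ordT_ord card_sub_set HAi.
  have HC : #|~: A| = (#|S| - i)%N by rewrite -HAi -(cardsC A) addKn.
  transitivity #|bc_F B {s | s \in ~: A} 'I_k|.
    by apply: eq_card => h; rewrite !inE andbT.
  by rewrite card_F_ord card_sub_set HC.
under eq_bigr => A _ do rewrite Hterm.
rewrite -big_mkcond /= sum_nat_const -card_draws; congr (_ * _)%N.
by apply: eq_card => A; rewrite inE.
Qed.

Lemma first_fail (T : finType) (D : {set T}) (Q : nat -> pred T) n :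
  #|D| = (#|[set x in D | [forall j : 'I_n, Q j x]]| +
          \sum_(i < n) #|[set x in D | ~~ Q i x && [forall j : 'I_i, Q j x]]|)%N.
Proof.
elim: n => [|n IH].
  rewrite big_ord0 addn0; apply: eq_card => x; rewrite inE.
  by case: (x \in D) => //=; symmetry; apply/forallP => -[].
have Hsplit : forall x, [forall j : 'I_n.+1, Q j x] = [forall j : 'I_n, Q j x] && Q n x.
  move=> x; apply/forallP/andP => [H|[/forallP H1 H2] j].
  - split; last exact: (H ord_max).
    by apply/forallP => j; exact: (H (widen_ord (leqnSn n) j)).
  - case: (ltnP j n) => Hj; first exact: (H1 (Ordinal Hj)).
    have -> : (j : nat) = n by apply/eqP; rewrite eqn_leq Hj -ltnS ltn_ord andbT.
    exact: H2.
rewrite {1}IH big_ord_recr /= [RHS]addnCA [LHS]addnC; congr (_ + _)%N.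
rewrite -(cardID [pred x | Q n x] [set x in D | [forall j : 'I_n, Q j x]]); congr (_ + _)%N.
- by apply: eq_card => x; rewrite !inE Hsplit andbA.
- by apply: eq_card => x; rewrite !inE andbCA.
Qed.

Lemma vX_split (m k : nat) (w : 'I_(m + k)) : vX (split w) = vI w.
Proof. by rewrite /vI; case: splitP => j /= ->. Qed.

Lemma term_iy B z (S : finType) (m y i : nat) :
  (m <= y)%N ->
  (forall j, (j <= i)%N -> (z j <= m%:Z)%R) -> (z i = m%:Z)%R ->
  #|[set f in bc_F B S 'I_y | Pi z i (@vI y) f]| =
  ('C(#|S|, i) * (ordT B z 'I_i m * #|bc_F B 'I_(#|S| - i) 'I_(y - m)|))%N.
Proof.
move=> Hm Hz Hzi.
have [k ->] : exists k, y = (m + k)%N by exists (y - m)%N; rewrite subnKC.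
rewrite addKn -(term_i B S k Hz Hzi).
apply: (card_transport (sigma := id) (sigma' := id) (tau := split) (tau' := unsplit)) => //.
- exact: splitK.
- exact: unsplitK.
move=> f Hf; have rf := bc_reluctant Hf.
rewrite /Pi; congr andb.
  by rewrite (cnt_transport (v := @vI (m + k))) // => w; rewrite vX_split.
apply: eq_forallb => j.
by rewrite (cnt_transport (v := @vI (m + k))) // => w; rewrite vX_split.
Qed.

Lemma main_count B z (S : finType) (y : nat) :
  (forall j i, (j <= i)%N -> (i < #|S|)%N -> (z j <= z i)%R) ->
  (forall i, (i < #|S|)%N -> (0 <= z i)%R) ->
  (forall i, (i < #|S|)%N -> (z i <= y%:Z)%R) ->
  #|bc_F B S 'I_y| = (ordT B z S y + \sum_(i < #|S|)
     'C(#|S|, i) * (ordT B z 'I_i `|z i|%N * #|bc_F B 'I_(#|S| - i) 'I_(y - `|z i|%N)|))%N.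
Proof.
move=> Hmono Hpos Hy.
rewrite (first_fail _ (fun j f => (j < cnt (@vI y) f (z j))%N) #|S|).
congr (_ + _)%N; apply: eq_bigr => i _.
have Hi := ltn_ord i.
have Hzi : (z i = (`|z i|%N)%:Z)%R by rewrite gez0_abs // Hpos.
rewrite -term_iy //.
- by rewrite -lez_nat -Hzi Hy.
- by move=> j Hj; rewrite -Hzi; apply: Hmono.
Qed.

Local Open Scope ring_scope.

Section Alg.
Variables (d : {poly rat} -> {poly rat}) (p : nat -> {poly rat}).
Hypothesis hd : delta_operator d.
Hypothesis hp : basic_sequence d p.

Lemma dlin a q r : d (a *: q + r) = a *: d q + d r.
Proof. by case: hd. Qed.

Lemma d0 : d 0 = 0.
Proof.
have H := dlin 1 0 0; rewrite !scale1r !addr0 in H.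
symmetry; apply: (@addrI _ (d 0)); by rewrite addr0 -H.
Qed.

Lemma dD q r : d (q + r) = d q + d r.
Proof. by have := dlin 1 q r; rewrite !scale1r. Qed.

Lemma dZ a q : d (a *: q) = a *: d q.
Proof. by rewrite -(addr0 (a *: q)) dlin d0 addr0. Qed.

Lemma iterD_lin i a q r : iter i d (a *: q + r) = a *: iter i d q + iter i d r.
Proof. by elim: i => //= i ->; rewrite dlin. Qed.

Lemma iter0 i : iter i d 0 = 0.
Proof. by elim: i => //= i ->; rewrite d0. Qed.

Lemma iterDD i q r : iter i d (q + r) = iter i d q + iter i d r.
Proof. by have := iterD_lin i 1 q r; rewrite !scale1r. Qed.

Lemma iterZ i a q : iter i d (a *: q) = a *: iter i d q.
Proof. by rewrite -(addr0 (a *: q)) iterD_lin iter0 addr0. Qed.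

Lemma iter_sum i (I : Type) (r : seq I) (F : I -> {poly rat}) :
  iter i d (\sum_(j <- r) F j) = \sum_(j <- r) iter i d (F j).
Proof.
elim: r => [|x r IH]; first by rewrite !big_nil iter0.
by rewrite !big_cons iterDD IH.
Qed.

Lemma iter_shift i q (a : rat) :
  iter i d (q \Po ('X + a%:P)) = (iter i d q) \Po ('X + a%:P).
Proof. by elim: i => //= i ->; case: hd => _ H _; rewrite H. Qed.

Lemma iter_p n i : (i <= n)%N -> iter i d (p n) = (n ^_ i)%:R *: p (n - i).
Proof.
elim: i => [|i IH] Hi; first by rewrite ffactn0 subn0 scale1r.
rewrite /= IH ?(ltnW Hi) // dZ.
have -> : (n - i = (n - i.+1).+1)%N by rewrite subnSK.
case: hp => _ _ _ ->; rewrite scalerA -natrM subnSK // -ffactnSr.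
by [].
Qed.


Lemma span_t W t : goncarov_basis d W t -> forall N (q : {poly rat}), (size q <= N)%N ->
  exists c : nat -> rat, q = \sum_(i < N) c i *: t i.
Proof.
move=> ht; elim=> [|N IH] q Hq.
  exists (fun _ => 0); rewrite big_ord0; apply/eqP; rewrite -size_poly_eq0.
  by rewrite -leqn0.
have [HtN _] := ht N.
have HtN0 : (t N)`_N != 0.
  have := lead_coef_eq0 (t N); rewrite lead_coefE HtN /= => ->.
  by rewrite -size_poly_eq0 HtN.
pose a := q`_N / (t N)`_N.
have Hs : (size (q - a *: t N)%R <= N)%N.
  apply/leq_sizeP => j Hj; rewrite coefB coefZ.
  case: (ltngtP j N) => H; first by rewrite ltnNge Hj in H.
  - have -> : q`_j = 0 by move/leq_sizeP: Hq => /(_ j H).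
    have -> : (t N)`_j = 0.
      have : (size (t N) <= N.+1)%N by rewrite HtN.
      by move/leq_sizeP => /(_ j H).
    by rewrite mulr0 subr0.
  - by rewrite H /a divfK // subrr.
have [c Hc] := IH _ Hs.
exists (fun i => if i == N then a else c i).
rewrite big_ord_recr /= eqxx -[q](subrK (a *: t N)) Hc; congr (_ + _).
apply: eq_bigr => i _; by rewrite ltn_eqF.
Qed.

Lemma expand W t : goncarov_basis d W t -> forall n (q : {poly rat}), (size q <= n.+1)%N ->
  forall a, q.[a] = \sum_(i < n.+1) (iter i d q).[W i] / (i`!)%:R * (t i).[a].
Proof.
move=> ht n q Hq a.
have [c Hc] := span_t ht Hq.
have Hcoef : forall j : 'I_n.+1, (iter j d q).[W j] = c j * (j`!)%:R.
  move=> j; rewrite Hc iter_sum horner_sum (bigD1 j) //= big1 ?addr0.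
    by rewrite iterZ hornerZ; case: (ht j) => _ ->; rewrite eqxx muln1.
  move=> i Hij; rewrite iterZ hornerZ; case: (ht i) => _ ->.
  by move: Hij; rewrite eq_sym -(inj_eq val_inj) /= => /negbTE ->; rewrite muln0 mulr0.
rewrite {1}Hc horner_sum; apply: eq_bigr => i _.
rewrite Hcoef mulfK ?hornerZ // pnatr_eq0 -lt0n; exact: fact_gt0.
Qed.

Lemma size_p n : size (p n) = n.+1.
Proof. by case: hp. Qed.

Lemma identity W t : goncarov_basis d W t -> forall n (a c : rat),
  (p n).[a + c] = \sum_(i < n.+1) ('C(n, i))%:R * (p (n - i)).[W i + c] * (t i).[a].
Proof.
move=> ht n a c.
have Hs : (size (p n \Po ('X + c%:P)) <= n.+1)%N by rewrite size_comp_poly2 ?size_XaddC // size_p.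
have -> : (p n).[a + c] = (p n \Po ('X + c%:P)).[a] by rewrite horner_comp !hornerE.
rewrite (expand ht Hs); apply: eq_bigr => i _.
rewrite iter_shift horner_comp !hornerE iter_p; last by rewrite -ltnS.
rewrite hornerZ -bin_ffact natrM (mulrAC _ (i`!%:R)) mulfK //.
by rewrite pnatr_eq0 -lt0n; exact: fact_gt0.
Qed.

End Alg.

Lemma final_ind (B : binomial_class) (p : nat -> {poly rat})
  (hcard : forall S X : finType, (#|bc_F B S X|)%:R = (p #|S|).[(#|X|)%:R])
  (hp0 : p 0%N = 1)
  (n : nat) (z : nat -> int)
  (hz0 : (0 < n)%N -> 1 <= z 0%N)
  (hzmono : forall i, (i.+1 < n)%N -> z i <= z i.+1)
  (a : nat -> rat)
  (Hid : forall N (y : nat), (p N).[y%:R] =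
     \sum_(i < N.+1) ('C(N, i))%:R * (p (N - i)%N).[y%:R - (z i)%:~R] * a i) :
  forall N, (N <= n)%N -> forall y : nat, ((0 < N)%N -> z N.-1 <= y%:Z) ->
  (ord_count B N y z)%:R = a N.
Proof.
have Hmono : forall j i, (j <= i)%N -> (i < n)%N -> z j <= z i.
  move=> j i Hji; elim: i Hji => [|i IH] Hji Hin.
    by rewrite leqn0 in Hji; rewrite (eqP Hji).
  case: (ltngtP j i.+1) Hji => // H _.
    apply: le_trans (IH _ (ltnW Hin)) (hzmono _ Hin); by rewrite -ltnS.
  by rewrite H.
have Hpos : forall i, (i < n)%N -> 0 <= z i.
  move=> i Hi; apply: le_trans (Hmono 0%N i (leq0n _) Hi).
  by apply: le_trans (hz0 _); [|apply: leq_ltn_trans Hi].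
elim/ltn_ind => N IH HN y Hy.
have Hzy : forall i, (i < N)%N -> z i <= y%:Z.
  move=> i Hi; have HN0 : (0 < N)%N by apply: leq_ltn_trans Hi.
  apply: le_trans (Hy HN0); apply: Hmono.
  - by rewrite -ltnS prednK.
  - by rewrite (leq_trans _ HN) // prednK.
have H := @main_count B z (ordinal N) y.
rewrite card_ord in H.
have H' := H (fun j i Hji Hi => Hmono j i Hji (leq_trans Hi HN))
             (fun i Hi => Hpos i (leq_trans Hi HN)) Hzy.
move/(congr1 (fun m : nat => (m%:R : rat))): H'.
rewrite hcard card_ord card_ord natrD natr_sum Hid big_ord_recr /= subnn hp0 hornerC.
rewrite binn mulr1 mul1r => Heq.
suff Hs : \sum_(i < N) 'C(N, i)%:R * (p (N - i)%N).[y%:R - (z i)%:~R] * a i =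
  \sum_(i < N) (('C(N, i) * (ordT B z 'I_i `|z i| * #|bc_F B 'I_(N - i) 'I_(y - `|z i|)|))%N)%:R.
  by move: Heq; rewrite Hs -ord_count_ordT addrC => /addIr ->.
apply: eq_bigr => i _.
have Hi := ltn_ord i.
have Hzi : z i = (`|z i|%N)%:Z by rewrite gez0_abs // Hpos // (leq_trans Hi HN).
rewrite natrM natrM hcard card_ord card_ord -ord_count_ordT IH //.
- rewrite natrB; last by rewrite -lez_nat -Hzi Hzy.
  rewrite {1}Hzi pmulrn.
  by rewrite mulrAC -mulrA [a i * _]mulrC.
- exact: leq_trans (ltnW Hi) HN.
- move=> Hi0; rewrite -Hzi; apply: Hmono; first exact: leq_pred.
  exact: leq_trans Hi HN.
Qed.

Theorem mainTheorem18
  (B : binomial_class) (d : {poly rat} -> {poly rat}) (p : nat -> {poly rat})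
  (hd : delta_operator d) (hp : basic_sequence d p)
  (hcard : forall S X : finType, (#|bc_F B S X|)%:R = (p #|S|).[(#|X|)%:R])
  (x n : nat) (hx : (0 < x)%N) (z : nat -> int)
  (hz0 : (0 < n)%N -> 1 <= z 0%N)
  (hzmono : forall i, (i.+1 < n)%N -> z i <= z i.+1)
  (hzx : (0 < n)%N -> z n.-1 <= x%:Z)
  (t1 t2 : nat -> {poly rat})
  (ht1 : goncarov_basis d (fun i => x%:R - (z i)%:~R) t1)
  (ht2 : goncarov_basis d (fun i => - (z i)%:~R) t2) :
  (ord_count B n x z)%:R = (t1 n).[x%:R] /\ (ord_count B n x z)%:R = (t2 n).[0].
Proof.
have hp0 : p 0%N = 1 by case: hp.
split.
- apply: (final_ind hcard hp0 hz0 hzmono (a := fun i => (t1 i).[x%:R])) => //.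
  move=> N y.
  have := identity hd hp ht1 N (x%:R) (y%:R - x%:R).
  rewrite addrC subrK => ->; apply: eq_bigr => i _ /=.
  by rewrite addrC addrA subrK.
- apply: (final_ind hcard hp0 hz0 hzmono (a := fun i => (t2 i).[0])) => //.
  move=> N y.
  have := identity hd hp ht2 N 0 (y%:R).
  rewrite add0r => ->; apply: eq_bigr => i _ /=.
  by rewrite addrC.
Qed.
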